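(* Let $n\ge1$, $G\le S_n$ and $\chi$ a character of $G$. The following are equivalent: (1) $d_\chi^G(A)=d_\chi^G(A^T)$ for every $A\in M_n(\mathbb C)$; (2) $d_\chi^G(AB)=d_\chi^G(BA)$ for all $A,B\in\mathbb S_n(\mathbb C)$; (3) $\chi$ is real valued.
   Context: A character of $G\le S_n$ is a function $g\mapsto\operatorname{tr}(\rho(g))$ for some homomorphism $\rho:G\to GL_m(\mathbb C)$, $m\ge1$. $\mathbb S_n(\mathbb C)$ is the set of complex symmetric $n\times n$ matrices. $d_\chi^G(A)=\sum_{\sigma\in G}\chi(\sigma)\prod_{i=1}^n A_{i\,\sigma(i)}$ for $A\in M_n(\mathbb C)$. *)

(* Defs.v *)
From HB Require Import structures.
From mathcomp Require Import all_boot all_order all_algebra all_fingroup all_solvable all_field all_character.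
Set Implicit Arguments. Unset Strict Implicit. Unset Printing Implicit Defensive.
Import Order.TTheory GRing.Theory Num.Theory.
Local Open Scope ring_scope.

Definition gen_mx_fun (C : numClosedFieldType) (n : nat) (G : {set 'S_n})
  (chi : 'S_n -> C) (A : 'M[C]_n) : C :=
  \sum_(s in G) chi s * \prod_(i < n) A i (s i).

Definition is_character (C : numClosedFieldType) (n : nat) (G : {group 'S_n})
  (chi : 'S_n -> C) : Prop :=
  exists m : nat, (0 < m)%N /\
    exists rG : mx_representation C G m, forall g, g \in G -> chi g = \tr (rG g).

(* Main.v *)
Require Import Defs.
From HB Require Import structures.
From mathcomp Require Import all_boot all_order all_algebra all_fingroup all_solvable all_field all_character.
From mathcomp Require Import ring zify.
Set Implicit Arguments. Unset Strict Implicit. Unset Printing Implicit Defensive.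
Import Order.TTheory GRing.Theory Num.Theory.
Local Open Scope ring_scope.

Lemma natmodz (k a b : nat) : (Posz k %| Posz a - Posz b)%Z -> (a = b %[mod k])%N.
Proof. rewrite -eqz_mod_dvd !modz_nat => /eqP H. by case: H. Qed.

Lemma A1 k j : (0 < k)%N -> (k.-1 * (k.-1 * j) = j %[mod k])%N.
Proof.
case: k => [|k] //= _.
apply: natmodz; apply/dvdzP; exists ((Posz k - 1) * Posz j).
rewrite !PoszM. ring.
Qed.
Lemma A2 k j : (0 < k)%N -> (k.-1 * (k.-1 * j) + 1 = j.+1 %[mod k])%N.
Proof.
case: k => [|k] //= _.
apply: natmodz; apply/dvdzP; exists ((Posz k - 1) * Posz j).
rewrite !PoszD !PoszM -addn1 PoszD. ring.
Qed.
Lemma A3 k j : (0 < k)%N -> (k.-1 * (k.-1 * j).+1 + 1 = j %[mod k])%N.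
Proof.
case: k => [|k] //= _.
apply: natmodz; apply/dvdzP; exists ((Posz k - 1) * Posz j + 1).
rewrite PoszD !PoszM -addn1 PoszD. ring.
Qed.

Section Invol.
Local Open Scope group_scope.
Variables (T : finType) (t : {perm T}).
Let tinj : injective t := @perm_inj _ t.
Let sym : connect_sym (frel t).
Proof. move=> x y; exact: fconnect_sym tinj x y. Qed.

Definition rt x := froot t x.
Definition kt x := fingraph.order t (rt x).
Definition jt x := findex t (rt x) x.

Lemma conn_rt x : fconnect t (rt x) x.
Proof. by rewrite sym; apply: connect_root. Qed.

Lemma xE x : x = (t ^+ jt x) (rt x).
Proof. by rewrite permX iter_findex // conn_rt. Qed.

Lemma powmod r a : (t ^+ a) r = (t ^+ (a %% fingraph.order t r)) r.
Proof.
rewrite {1}(divn_eq a (fingraph.order t r)) !permX addnC iterD; congr iter.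
elim: (a %/ fingraph.order t r)%N => // q IH.
by rewrite mulSn iterD IH iter_order.
Qed.

Lemma rt_pow x m : rt ((t ^+ m) (rt x)) = rt x.
Proof.
have h : fconnect t (rt x) ((t ^+ m) (rt x)) by rewrite permX fconnect_iter.
by rewrite /rt -(fingraph.rootP sym h) (root_root sym).
Qed.

Lemma kt_pow x m : kt ((t ^+ m) (rt x)) = kt x.
Proof. by rewrite /kt rt_pow. Qed.

Lemma jt_pow x m : jt ((t ^+ m) (rt x)) = (m %% kt x)%N.
Proof.
by rewrite /jt rt_pow powmod permX findex_iter // ltn_pmod // fingraph.order_gt0.
Qed.

Definition uf x := (t ^+ ((kt x).-1 * jt x)) (rt x).
Definition vf x := (t ^+ ((kt x).-1 * jt x).+1) (rt x).

Lemma uf_inv : involutive uf.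
Proof.
move=> x; rewrite {1}/uf /uf kt_pow jt_pow rt_pow.
rewrite [in RHS](xE x) [RHS]powmod [LHS]powmod -/(kt x).
by rewrite modnMmr A1 // fingraph.order_gt0.
Qed.

Lemma vf_inv : involutive vf.
Proof.
move=> x; rewrite {1}/vf /vf kt_pow jt_pow rt_pow.
rewrite [in RHS](xE x) [RHS]powmod [LHS]powmod -/(kt x).
by rewrite -addn1 -modnDml modnMmr modnDml A3 // fingraph.order_gt0.
Qed.

Lemma vf_uf x : vf (uf x) = t x.
Proof.
rewrite {1}/vf /uf kt_pow jt_pow rt_pow.
rewrite [in RHS](xE x) -permM -expgSr [RHS]powmod [LHS]powmod -/(kt x).
by rewrite -addn1 -modnDml modnMmr modnDml A2 // fingraph.order_gt0.
Qed.

Lemma two_invol : exists u v : {perm T}, [/\ u^-1 = u, v^-1 = v & t = u * v]%g.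
Proof.
exists (perm (can_inj uf_inv)), (perm (can_inj vf_inv)); split.
- by apply/eqP; rewrite eq_invg_mul; apply/eqP/permP => x; rewrite permM !permE uf_inv.
- by apply/eqP; rewrite eq_invg_mul; apply/eqP/permP => x; rewrite permM !permE vf_inv.
- by apply/permP => x; rewrite permM !permE vf_uf.
Qed.
End Invol.

Section Lin.
Variable C : numClosedFieldType.

Lemma unity_conj (z : C) N : (0 < N)%N -> z ^+ N = 1 -> z ^+ N.-1 = z^*.
Proof.
move=> N0 zN.
have nz : `|z| = 1.
  apply/eqP; rewrite -(pexpr_eq1 N0) ?normr_ge0 // -normrX zN normr1 //.
have zz : z * z^* = 1 by rewrite -normCK nz expr1n.
by rewrite -[LHS]mulr1 -zz mulrA -exprSr prednK // zN mul1r.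
Qed.

Lemma sqfree_XnB1 N (z : C) : (0 < N)%N -> ~~ (('X - z%:P) ^+ 2 %| 'X^N - 1).
Proof.
move=> N0; apply/dvdpP => -[q Hq].
have z1 : z ^+ N = 1.
  have := congr1 (fun p => p.[z]) Hq.
  rewrite !hornerE /= subrr !mulr0.
  by move/eqP; rewrite subr_eq0 => /eqP.
have := congr1 (fun p => (p^`()).[z]) Hq.
rewrite derivB derivXn derivC subr0 derivM deriv_exp derivXsubC.
rewrite !hornerE hornerMn hornerXn /= subrr expr1 add0r subrr !mulr0 addr0.
move/eqP; rewrite mulrn_eq0 expf_eq0 => /orP[/eqP N00|/andP[_ /eqP z0]].
  by rewrite N00 in N0.
move: z1; rewrite z0 expr0n.
by case: N {Hq} N0 => // ? _ /eqP; rewrite eq_sym oner_eq0.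
Qed.

Lemma uniq_of_prod (q : {poly C}) (r : seq C) :
  (forall z, ~~ (('X - z%:P) ^+ 2 %| q)) ->
  \prod_(z <- r) ('X - z%:P) %| q -> uniq r.
Proof.
move=> sq; elim: r => //= x r IH; rewrite big_cons => Hd.
apply/andP; split; last first.
  by apply: IH; apply: dvdp_trans Hd; apply: dvdp_mull.
apply/negP => xr; move: (sq x); rewrite (big_rem x xr) /= mulrA -expr2 in Hd.
by apply/negP/negPn; apply: dvdp_trans Hd; apply: dvdp_mulr.
Qed.

Lemma conj_pow m (P A : 'M[C]_m.+1) k : P \in unitmx ->
  (invmx P *m A *m P) ^+ k = invmx P *m A ^+ k *m P.
Proof.
move=> Pu; elim: k => [|k IH].
  by rewrite !expr0 mulmx1 mulVmx.
rewrite !exprSr IH -!mulmxE !mulmxA; congr (_ *m _).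
by rewrite -!mulmxA mulKVmx.
Qed.

Lemma diag_pow m (d : 'rV[C]_m.+1) k :
  (diag_mx d) ^+ k = diag_mx (\row_j (d 0 j ^+ k)).
Proof.
elim: k => [|k IH].
  rewrite expr0 -[1](diag_const_mx (m.+1) (1:C)); congr diag_mx; apply/matrixP => i j; by rewrite !mxE.
rewrite exprSr IH -mulmxE mulmx_diag; congr diag_mx; apply/matrixP => i j.
by rewrite !mxE exprSr.
Qed.

Lemma tr_inv_conj m (M : 'M[C]_m.+1) N : (0 < N)%N -> M ^+ N = 1 ->
  \tr (M ^+ N.-1) = (\tr M)^*.
Proof.
move=> N0 MN.
have mdvd : mxminpoly M %| 'X^N - 1.
  apply: mxminpoly_min; rewrite rmorphB rmorphXn /= horner_mx_X rmorph1 MN subrr //.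
have [r Hr] := closed_field_poly_normal (mxminpoly M).
rewrite (monicP (mxminpoly_monic M)) scale1r in Hr.
have ur : uniq r.
  apply: (uniq_of_prod (fun z => sqfree_XnB1 z N0)); by rewrite -Hr.
have [P Pu /(diagonalizable_forLR Pu) [d]] : diagonalizable M.
  by apply/diagonalizableP; exists r => //; rewrite Hr.
rewrite mxpoly.conjVmx // => Md.
have trk k : \tr (M ^+ k) = \sum_j d 0 j ^+ k.
  rewrite Md conj_pow // diag_pow mxtrace_mulC mulmxA mulmxV // mul1mx mxtrace_diag.
  by apply: eq_bigr => j _; rewrite mxE.
have t1 := trk 1%N; rewrite expr1 in t1; rewrite (trk N.-1) t1 rmorph_sum; apply: eq_bigr => j _.
rewrite expr1 unity_conj //.
have : (diag_mx d) ^+ N = 1.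
  have := MN; rewrite Md conj_pow // => H.
  have := congr1 (fun X => P *m X *m invmx P) H.
  rewrite !mulmxA mulmxV // mul1mx -!mulmxA mulmxV // mulmx1 => ->.
  by rewrite mul1mx mulmxV.
rewrite diag_pow => /matrixP /(_ j j); rewrite !mxE eqxx /= mulr1n.
by [].
Qed.
End Lin.


Section Main.
Variable C : numClosedFieldType.
Variable n : nat.

Lemma perm_mx_entry (w : 'S_n) i j : (perm_mx w : 'M[C]_n) i j = (w i == j)%:R.
Proof. by rewrite /perm_mx !mxE. Qed.

Lemma prod_perm (s w : 'S_n) :
  \prod_i (perm_mx w : 'M[C]_n) i (s i) = (s == w)%:R.
Proof.
case: eqP => [->|ne].
  by rewrite big1 // => i _; rewrite perm_mx_entry eqxx.
case: (pickP (fun i => s i != w i)) => [i Hi|H].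
  rewrite (bigD1 i) //= perm_mx_entry eq_sym (negbTE Hi) mul0r //.
by case: ne; apply/permP => i; move: (H i) => /= /negbFE /eqP.
Qed.

Lemma d_perm (G : {set 'S_n}) (chi : 'S_n -> C) (w : 'S_n) :
  gen_mx_fun G chi (perm_mx w) = if w \in G then chi w else 0.
Proof.
rewrite /gen_mx_fun; under eq_bigr do rewrite prod_perm.
case: ifP => wG.
  rewrite (bigD1 w) //= eqxx mulr1 big1 ?addr0 // => s /andP[_ ne].
  by rewrite (negbTE ne) mulr0.
rewrite big1 // => s sG; case: eqP => [e|_]; last by rewrite mulr0.
by rewrite -e sG in wG.
Qed.

Lemma d_tr (G : {group 'S_n}) (chi : 'S_n -> C) (A : 'M[C]_n) :
  gen_mx_fun G chi A^T = \sum_(s in G) chi (s^-1)%g * \prod_i A i (s i).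
Proof.
rewrite /gen_mx_fun [LHS](reindex_inj invg_inj) /=.
apply: eq_big => [s|s _]; first by rewrite groupV.
congr (_ * _).
rewrite (reindex_inj (@perm_inj _ s)) /=.
by apply: eq_bigr => i _; rewrite mxE permK.
Qed.
End Main.

Unset Implicit Arguments.
Set Strict Implicit.

Theorem mainTheorem11 (C : numClosedFieldType) (n : nat) (n_gt0 : (0 < n)%N)
  (G : {group 'S_n}) (chi : 'S_n -> C) (Hchi : is_character G chi) :
  [/\ ((forall A : 'M[C]_n, gen_mx_fun G chi A = gen_mx_fun G chi A^T) <->
       (forall A B : 'M[C]_n, A^T = A -> B^T = B ->
          gen_mx_fun G chi (A *m B) = gen_mx_fun G chi (B *m A))),
      ((forall A B : 'M[C]_n, A^T = A -> B^T = B ->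
          gen_mx_fun G chi (A *m B) = gen_mx_fun G chi (B *m A)) <->
       (forall g, g \in G -> chi g \is Num.real)) &
      ((forall g, g \in G -> chi g \is Num.real) <->
       (forall A : 'M[C]_n, gen_mx_fun G chi A = gen_mx_fun G chi A^T))].
Proof.
pose Inv := forall t, t \in G -> chi t = chi (t^-1)%g.
have E1 : (forall A : 'M[C]_n, gen_mx_fun G chi A = gen_mx_fun G chi A^T) <-> Inv.
  split.
    move=> H t tG; have := H (perm_mx t); rewrite tr_perm_mx !d_perm groupV tG.
    by [].
  move=> H A; rewrite d_tr /gen_mx_fun; apply: eq_bigr => s sG.
  by rewrite H.
have Cj : forall t, t \in G -> chi (t^-1)%g = (chi t)^*.
  case: Hchi => m [m0 [rG HrG]] t tG.
  rewrite !HrG ?groupV //.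
  case: m m0 rG HrG => // m _ rG _.
  rewrite invg_expg repr_mxX // tr_inv_conj //.
  by rewrite -repr_mxX // expg_order repr_mx1.
have E3 : (forall g, g \in G -> chi g \is Num.real) <-> Inv.
  split => H t tG.
    by rewrite Cj //; move: (H t tG); rewrite CrealE => /eqP ->.
  by rewrite CrealE -Cj // -H.
have R12 : (forall A : 'M[C]_n, gen_mx_fun G chi A = gen_mx_fun G chi A^T) ->
       (forall A B : 'M[C]_n, A^T = A -> B^T = B ->
          gen_mx_fun G chi (A *m B) = gen_mx_fun G chi (B *m A)).
  by move=> H A B hA hB; rewrite H trmx_mul hA hB.
have R2I : (forall A B : 'M[C]_n, A^T = A -> B^T = B ->
          gen_mx_fun G chi (A *m B) = gen_mx_fun G chi (B *m A)) -> Inv.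
  move=> H t tG.
  have [u [v [uV vV tuv]]] := two_invol t.
  have := H (perm_mx u) (perm_mx v).
  rewrite !tr_perm_mx uV vV -!perm_mxM => /(_ erefl erefl).
  have -> : (v * u = t^-1)%g by rewrite tuv invMg uV vV.
  by rewrite -tuv !d_perm groupV tG.
split.
- split; first exact: R12.
  by move=> H; apply/E1/R2I.
- split; first by move=> H; apply/E3/R2I.
  by move=> H; apply/R12/E1/E3.
- by split => H; [apply/E1/E3 | apply/E3/E1].
Qed.
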